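(* Let $\mathbf r(x,y)$ be the middle surface of a membrane O surface with constant purely normal load $q_n\neq 0$ (setting and notation as in the context), and suppose it is of the 2nd kind, i.e. the curvature line coordinates $(x,y)$ are such that $$2\overline{A}_1 H_\circ - q_n A_1^2 = -q_n,\qquad 2\overline{A}_2 K_\circ - q_n A_2^2 = -q_n$$ (the normalization $f(x)=g(y)=q_n$). Then the first and third fundamental forms are represented as $$\mathrm{I} = (\cos\alpha + h\sin\alpha)^2\,dx^2 + (\sin\alpha - h\cos\alpha)^2\,dy^2,\qquad \mathrm{III} = e^{2\xi}(\sin^2\alpha\,dx^2 + \cos^2\alpha\,dy^2),$$ where the functions $h,\alpha,\xi$ of $(x,y)$ satisfy the system $$h_x = (h+\cot\alpha)\,\xi_x,\qquad h_y = (h-\tan\alpha)\,\xi_y,$$ $$\xi_{xy} = \xi_x\xi_y + (\log\sin\alpha)_y\,\xi_x + (\log\cos\alpha)_x\,\xi_y,$$ $$(-\alpha_x + \xi_x\cot\alpha)_x + (\alpha_y + \xi_y\tan\alpha)_y + e^{2\xi}\sin\alpha\cos\alpha = 0.$$ Furthermore, the stress resultants are given by $$T_1 = \frac{q_n e^{-\xi}}{2}\,\frac{2h\sin\alpha + (1-h^2)\cos\alpha}{\sin\alpha - h\cos\alpha},\qquad T_2 = \frac{q_n e^{-\xi}}{2}\,\frac{2h\cos\alpha - (1-h^2)\sin\alpha}{\cos\alpha + h\sin\alpha}.$$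
   Context: Let $\mathbf r(x,y)$ be a smooth surface in $\mathbb R^3$ parametrized by curvature line coordinates $(x,y)$, normalized so that $\mathbf r_x = A_1\mathbf X$, $\mathbf r_y = A_2\mathbf Y$ with $\mathbf X,\mathbf Y$ orthonormal. Let $\mathbf N = \mathbf X\times\mathbf Y$, let $\kappa_1,\kappa_2$ be the principal curvatures along the $x$- and $y$-lines, and set $H_\circ = -\kappa_1 A_1$, $K_\circ = -\kappa_2 A_2$, so that $\mathbf N_x = H_\circ\mathbf X$, $\mathbf N_y = K_\circ\mathbf Y$; the first fundamental form is $\mathrm I = A_1^2dx^2 + A_2^2dy^2$ and the third is $\mathrm{III} = H_\circ^2dx^2 + K_\circ^2dy^2$. Put $p=(A_1)_y/A_2$, $q = (A_2)_x/A_1$; the Gauss–Mainardi–Codazzi equations are $(H_\circ)_y = pK_\circ$, $(K_\circ)_x = qH_\circ$, $p_y+q_x+H_\circ K_\circ = 0$. The surface is the middle surface of a shell membrane on which a constant purely normal load $q_n\neq0$ (per unit area) acts, with principal stress lines coinciding with principal curvature lines; the in-plane normal stress resultants $T_1,T_2$ satisfy the equilibrium equations $(T_1)_x + (\log A_1)_x(T_1-T_2)=0$, $(T_2)_y + (\log A_2)_y(T_2-T_1)=0$, $\kappa_1T_1+\kappa_2T_2+q_n=0$. Such a configuration is called a membrane O surface. Set $\overline A_1 = T_2A_1$, $\overline A_2 = T_1A_2$. Then $f := q_nA_1^2 - 2\overline A_1H_\circ$ depends only on $x$ and $g := q_nA_2^2 - 2\overline A_2K_\circ$ depends only on $y$.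 The membrane O surface is said to be of the 1st kind if the curvature line coordinates can be chosen so that $f=-g=q_n$, and of the 2nd kind if they can be chosen so that $f=g=q_n$. *)

(* Defs.v *)
From Stdlib Require Import Reals List.
From Coquelicot Require Import Coquelicot.
Open Scope R_scope.

Definition dx (f : R -> R -> R) : R -> R -> R :=
  fun x y => Derive (fun t => f t y) x.
Definition dy (f : R -> R -> R) : R -> R -> R :=
  fun x y => Derive (fun t => f x t) y.

Definition Dw (l : list bool) (f : R -> R -> R) : R -> R -> R :=
  fold_right (fun (b : bool) g => if b then dx g else dy g) f l.

Definition smooth_on (U : R -> R -> Prop) (f : R -> R -> R) : Prop :=
  forall (l : list bool) (x y : R), U x y ->
    ex_derive (fun t => Dw l f t y) x /\
    ex_derive (fun t => Dw l f x t) y /\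
    continuous (fun p : R * R => Dw l f (fst p) (snd p)) (x, y).

Definition open2 (U : R -> R -> Prop) : Prop :=
  forall x y, U x y -> exists eps, 0 < eps /\
    forall x' y', Rabs (x' - x) < eps -> Rabs (y' - y) < eps -> U x' y'.

Definition square (x0 y0 eps : R) : R -> R -> Prop :=
  fun x y => Rabs (x - x0) < eps /\ Rabs (y - y0) < eps.

Definition V3 := (R * R * R)%type.
Definition c1 (v : V3) : R := fst (fst v).
Definition c2 (v : V3) : R := snd (fst v).
Definition c3 (v : V3) : R := snd v.
Definition dot (u v : V3) : R := c1 u * c1 v + c2 u * c2 v + c3 u * c3 v.
Definition cross (u v : V3) : V3 :=
  (c2 u * c3 v - c3 u * c2 v, c3 u * c1 v - c1 u * c3 v, c1 u * c2 v - c2 u * c1 v).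
Definition vscale (a : R) (v : V3) : V3 := (a * c1 v, a * c2 v, a * c3 v).

Definition dxV (F : R -> R -> V3) : R -> R -> V3 :=
  fun x y => (dx (fun s t => c1 (F s t)) x y,
              dx (fun s t => c2 (F s t)) x y,
              dx (fun s t => c3 (F s t)) x y).
Definition dyV (F : R -> R -> V3) : R -> R -> V3 :=
  fun x y => (dy (fun s t => c1 (F s t)) x y,
              dy (fun s t => c2 (F s t)) x y,
              dy (fun s t => c3 (F s t)) x y).
Definition smoothV (U : R -> R -> Prop) (F : R -> R -> V3) : Prop :=
  smooth_on U (fun s t => c1 (F s t)) /\
  smooth_on U (fun s t => c2 (F s t)) /\
  smooth_on U (fun s t => c3 (F s t)).

Definition normal (X Y : R -> R -> V3) : R -> R -> V3 :=
  fun x y => cross (X x y) (Y x y).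

(** H_circ = - kappa_1 A_1, K_circ = - kappa_2 A_2. *)
Definition circ (k A : R -> R -> R) : R -> R -> R := fun x y => - k x y * A x y.

(* Main.v *)
Require Import Defs.
From Stdlib Require Import Reals List Lia Lra.
From Coquelicot Require Import Coquelicot.
Open Scope R_scope.


Lemma open2_locx W x y : open2 W -> W x y -> locally x (fun t => W t y).
Proof.
  intros HW H. destruct (HW x y H) as [e [He Hb]].
  exists (mkposreal e He). intros t Ht. apply Hb. exact Ht.
  rewrite Rminus_diag, Rabs_R0; exact He.
Qed.

Lemma open2_locy W x y : open2 W -> W x y -> locally y (fun t => W x t).
Proof.
  intros HW H. destruct (HW x y H) as [e [He Hb]].
  exists (mkposreal e He). intros t Ht. apply Hb.
  rewrite Rminus_diag, Rabs_R0; exact He. exact Ht.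
Qed.

Lemma open2_loc2 W x y : open2 W -> W x y ->
  locally (x, y) (fun p : R * R => W (fst p) (snd p)).
Proof.
  intros HW H. destruct (HW x y H) as [e [He Hb]].
  exists (mkposreal e He). intros [u v] [Hu Hv]. apply Hb; assumption.
Qed.

Lemma Dw_loc W f g l : open2 W -> (forall x y, W x y -> f x y = g x y) ->
  forall x y, W x y -> Dw l f x y = Dw l g x y.
Proof.
  intros HW Hfg. induction l as [|b l IH]; intros x y Hxy; simpl.
  - apply Hfg; exact Hxy.
  - destruct b; unfold dx, dy; apply Derive_ext_loc.
    + generalize (open2_locx W x y HW Hxy). apply filter_imp. intros t Ht. apply IH; exact Ht.
    + generalize (open2_locy W x y HW Hxy). apply filter_imp. intros t Ht. apply IH; exact Ht.
Qed.

Definition SN (W : R -> R -> Prop) (n : nat) (f : R -> R -> R) : Prop :=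
  forall l, (length l <= n)%nat -> forall x y, W x y ->
    ex_derive (fun t => Dw l f t y) x /\
    ex_derive (fun t => Dw l f x t) y /\
    continuous (fun p : R * R => Dw l f (fst p) (snd p)) (x, y).

Lemma SN_ext W n f g : open2 W -> (forall x y, W x y -> f x y = g x y) ->
  SN W n g -> SN W n f.
Proof.
  intros HW Hfg Hg l Hl x y Hxy. destruct (Hg l Hl x y Hxy) as [H1 [H2 H3]].
  split; [|split].
  - apply ex_derive_ext_loc with (f := fun t => Dw l g t y); [|exact H1].
    generalize (open2_locx W x y HW Hxy). apply filter_imp. intros t Ht.
    symmetry; apply (Dw_loc W f g l HW Hfg); exact Ht.
  - apply ex_derive_ext_loc with (f := fun t => Dw l g x t); [|exact H2].
    generalize (open2_locy W x y HW Hxy). apply filter_imp. intros t Ht.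
    symmetry; apply (Dw_loc W f g l HW Hfg); exact Ht.
  - apply continuous_ext_loc with (g := fun p : R * R => Dw l g (fst p) (snd p)); [|exact H3].
    generalize (open2_loc2 W x y HW Hxy). apply filter_imp. intros p Hp.
    symmetry; apply (Dw_loc W f g l HW Hfg); exact Hp.
Qed.

Lemma SN_mono W n m f : (m <= n)%nat -> SN W n f -> SN W m f.
Proof. intros Hmn H l Hl. apply H. lia. Qed.

Lemma Dw_app l b f : Dw (l ++ b :: nil) f = Dw l (if b then dx f else dy f).
Proof. unfold Dw. rewrite fold_right_app. reflexivity. Qed.

Lemma SN_dx W n f : SN W (S n) f -> SN W n (dx f).
Proof.
  intros H l Hl x y Hxy. generalize (H (l ++ true :: nil)). rewrite Dw_app.
  intro H'. apply H'; [rewrite length_app; simpl; lia | exact Hxy].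
Qed.

Lemma SN_dy W n f : SN W (S n) f -> SN W n (dy f).
Proof.
  intros H l Hl x y Hxy. generalize (H (l ++ false :: nil)). rewrite Dw_app.
  intro H'. apply H'; [rewrite length_app; simpl; lia | exact Hxy].
Qed.

Lemma SN_S W n f : SN W 0 f -> SN W n (dx f) -> SN W n (dy f) -> SN W (S n) f.
Proof.
  intros H0 Hx Hy l Hl x y Hxy.
  destruct l as [|b l'].
  - apply H0; [simpl; lia | exact Hxy].
  - destruct (exists_last (l := b :: l')) as [l'' [a Ha]]; [discriminate|].
    rewrite Ha. rewrite Dw_app. rewrite Ha in Hl. rewrite length_app in Hl; simpl in Hl.
    destruct a; [apply Hx | apply Hy]; (lia || exact Hxy).
Qed.

Lemma SN0_intro W f : (forall x y, W x y ->
    ex_derive (fun t => f t y) x /\ ex_derive (fun t => f x t) y /\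
    continuous (fun p : R * R => f (fst p) (snd p)) (x, y)) -> SN W 0 f.
Proof.
  intros H l Hl x y Hxy. destruct l; [|simpl in Hl; lia]. simpl. apply H; exact Hxy.
Qed.

Lemma SN0_elim W n f x y : SN W n f -> W x y ->
    ex_derive (fun t => f t y) x /\ ex_derive (fun t => f x t) y /\
    continuous (fun p : R * R => f (fst p) (snd p)) (x, y).
Proof. intros H Hxy. apply (H nil); [simpl; lia | exact Hxy]. Qed.

Lemma smooth_SN W f : smooth_on W f -> forall n, SN W n f.
Proof. intros H n l _ x y Hxy. apply H; exact Hxy. Qed.

Lemma SN_smooth W f : (forall n, SN W n f) -> smooth_on W f.
Proof. intros H l x y Hxy. apply (H (length l) l (le_n _)); exact Hxy. Qed.


Section Clo.
Variable W : R -> R -> Prop.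
Hypothesis HW : open2 W.

Lemma SN_const : forall n c, SN W n (fun _ _ => c).
Proof.
  induction n; intro c.
  - apply SN0_intro. intros x y _. split; [|split].
    + apply ex_derive_const. + apply ex_derive_const. + apply continuous_const.
  - apply SN_S; [apply SN0_intro; intros x y _; split; [|split]; try apply ex_derive_const; apply continuous_const| |].
    + apply SN_ext with (g := fun _ _ => 0); [exact HW| |apply IHn].
      intros x y _. unfold dx. apply Derive_const.
    + apply SN_ext with (g := fun _ _ => 0); [exact HW| |apply IHn].
      intros x y _. unfold dy. apply Derive_const.
Qed.

Lemma SN_plus : forall n f g, SN W n f -> SN W n g -> SN W n (fun x y => f x y + g x y).
Proof.
  induction n; intros f g Hf Hg.
  - apply SN0_intro. intros x y Hxy.
    destruct (SN0_elim W _ f x y Hf Hxy) as [F1 [F2 F3]].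
    destruct (SN0_elim W _ g x y Hg Hxy) as [G1 [G2 G3]].
    split; [|split]; [apply (ex_derive_plus (fun t => f t y) (fun t => g t y)); assumption|apply (ex_derive_plus (fun t => f x t) (fun t => g x t)); assumption|].
    apply (continuous_plus (fun p : R * R => f (fst p) (snd p)) (fun p : R * R => g (fst p) (snd p))); assumption.
  - apply SN_S.
    + apply SN_mono with n; [lia|]. apply IHn; apply SN_mono with (S n); (lia || assumption).
    + apply SN_ext with (g := fun x y => dx f x y + dx g x y); [exact HW| |].
      * intros x y Hxy. destruct (SN0_elim W _ f x y Hf Hxy) as [F1 _].
        destruct (SN0_elim W _ g x y Hg Hxy) as [G1 _].
        unfold dx. apply Derive_plus; assumption.
      * apply IHn; apply SN_dx; assumption.
    + apply SN_ext with (g := fun x y => dy f x y + dy g x y); [exact HW| |].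
      * intros x y Hxy. destruct (SN0_elim W _ f x y Hf Hxy) as [_ [F1 _]].
        destruct (SN0_elim W _ g x y Hg Hxy) as [_ [G1 _]].
        unfold dy. apply Derive_plus; assumption.
      * apply IHn; apply SN_dy; assumption.
Qed.

Lemma SN_mult : forall n f g, SN W n f -> SN W n g -> SN W n (fun x y => f x y * g x y).
Proof.
  induction n; intros f g Hf Hg.
  - apply SN0_intro. intros x y Hxy.
    destruct (SN0_elim W _ f x y Hf Hxy) as [F1 [F2 F3]].
    destruct (SN0_elim W _ g x y Hg Hxy) as [G1 [G2 G3]].
    split; [|split]; [apply ex_derive_mult; assumption|apply ex_derive_mult; assumption|].
    apply (continuous_mult (fun p : R * R => f (fst p) (snd p)) (fun p : R * R => g (fst p) (snd p))); assumption.
  - assert (Hf' : SN W n f) by (apply SN_mono with (S n); (lia || assumption)).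
    assert (Hg' : SN W n g) by (apply SN_mono with (S n); (lia || assumption)).
    apply SN_S.
    + apply SN_mono with n; [lia|]. apply IHn; assumption.
    + apply SN_ext with (g := fun x y => dx f x y * g x y + f x y * dx g x y); [exact HW| |].
      * intros x y Hxy. destruct (SN0_elim W _ f x y Hf Hxy) as [F1 _].
        destruct (SN0_elim W _ g x y Hg Hxy) as [G1 _].
        unfold dx. apply (Derive_mult (fun t => f t y) (fun t => g t y)); assumption.
      * apply SN_plus; apply IHn; try assumption; apply SN_dx; assumption.
    + apply SN_ext with (g := fun x y => dy f x y * g x y + f x y * dy g x y); [exact HW| |].
      * intros x y Hxy. destruct (SN0_elim W _ f x y Hf Hxy) as [_ [F1 _]].
        destruct (SN0_elim W _ g x y Hg Hxy) as [_ [G1 _]].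
        unfold dy. apply (Derive_mult (fun t => f x t) (fun t => g x t)); assumption.
      * apply SN_plus; apply IHn; try assumption; apply SN_dy; assumption.
Qed.

Lemma SN_comp (P : R -> Prop) (phi phi' : R -> R) :
  (forall z, P z -> is_derive phi z (phi' z)) ->
  (forall n f, SN W n f -> (forall x y, W x y -> P (f x y)) ->
      SN W n (fun x y => phi (f x y)) -> SN W n (fun x y => phi' (f x y))) ->
  forall n f, SN W n f -> (forall x y, W x y -> P (f x y)) ->
     SN W n (fun x y => phi (f x y)).
Proof.
  intros Hd Hd'. induction n; intros f Hf HP.
  - apply SN0_intro. intros x y Hxy.
    destruct (SN0_elim W _ f x y Hf Hxy) as [F1 [F2 F3]].
    assert (Hp := Hd _ (HP x y Hxy)).
    split; [|split].
    + eexists. apply (is_derive_comp phi (fun t => f t y)); [exact Hp|]. apply Derive_correct; exact F1.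
    + eexists. apply (is_derive_comp phi (fun t => f x t)); [exact Hp|]. apply Derive_correct; exact F2.
    + apply (continuous_comp (fun p : R * R => f (fst p) (snd p)) phi); [exact F3|].
      simpl. apply (ex_derive_continuous (K:=R_AbsRing) (V:=R_NormedModule) phi). eexists; exact Hp.
  - assert (Hf' : SN W n f) by (apply SN_mono with (S n); (lia || assumption)).
    assert (IH := IHn f Hf' HP).
    assert (Hp' := Hd' n f Hf' HP IH).
    apply SN_S.
    + apply SN_mono with n; [lia|exact IH].
    + apply SN_ext with (g := fun x y => phi' (f x y) * dx f x y); [exact HW| |].
      * intros x y Hxy. destruct (SN0_elim W _ f x y Hf Hxy) as [F1 _].
        unfold dx. apply is_derive_unique.
        replace (phi' (f x y) * Derive (fun t => f t y) x) with
          (scal (Derive (fun t => f t y) x) (phi' (f x y))) by (unfold scal; simpl; unfold mult; simpl; ring).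
        apply (is_derive_comp phi (fun t => f t y)); [apply Hd; apply HP; exact Hxy|].
        apply Derive_correct; exact F1.
      * apply SN_mult; [exact Hp'|apply SN_dx; exact Hf].
    + apply SN_ext with (g := fun x y => phi' (f x y) * dy f x y); [exact HW| |].
      * intros x y Hxy. destruct (SN0_elim W _ f x y Hf Hxy) as [_ [F1 _]].
        unfold dy. apply is_derive_unique.
        replace (phi' (f x y) * Derive (fun t => f x t) y) with
          (scal (Derive (fun t => f x t) y) (phi' (f x y))) by (unfold scal; simpl; unfold mult; simpl; ring).
        apply (is_derive_comp phi (fun t => f x t)); [apply Hd; apply HP; exact Hxy|].
        apply Derive_correct; exact F1.
      * apply SN_mult; [exact Hp'|apply SN_dy; exact Hf].
Qed.

Lemma SN_inv : forall n f, SN W n f -> (forall x y, W x y -> f x y <> 0) ->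
  SN W n (fun x y => / f x y).
Proof.
  apply (SN_comp (fun z => z <> 0) Rinv (fun z => - / z ^ 2)).
  - intros z Hz. 
    assert (H := is_derive_inv (fun t => t) z 1 (is_derive_id z) Hz).
    replace (- / z ^ 2) with (- 1 / z ^ 2) by (field; exact Hz). exact H.
  - intros n f Hf HP Hi.
    apply SN_ext with (g := fun x y => (fun _ _ => -1) x y * ((/ f x y) * (/ f x y))); [exact HW| |].
    + intros x y Hxy. field. apply HP; exact Hxy.
    + apply SN_mult; [apply SN_const|apply SN_mult; exact Hi].
Qed.

Lemma SN_ln : forall n f, SN W n f -> (forall x y, W x y -> 0 < f x y) ->
  SN W n (fun x y => ln (f x y)).
Proof.
  apply (SN_comp (fun z => 0 < z) ln Rinv).
  - intros z Hz. apply is_derive_ln; exact Hz.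
  - intros n f Hf HP _. apply SN_inv; [exact Hf|]. intros x y Hxy. apply Rgt_not_eq, HP, Hxy.
Qed.

Lemma SN_atan : forall n f, SN W n f -> SN W n (fun x y => atan (f x y)).
Proof.
  intros n f Hf.
  apply (SN_comp (fun _ => True) atan (fun z => / (1 + z²))); try easy.
  - intros z _. apply is_derive_atan.
  - clear n f Hf. intros n f Hf _ _. apply SN_inv.
    + apply SN_plus; [apply SN_const|]. unfold Rsqr. apply SN_mult; exact Hf.
    + intros x y _. generalize (Rle_0_sqr (f x y)). intros; lra.
Qed.

End Clo.

Lemma SN_opp W n f : open2 W -> SN W n f -> SN W n (fun x y => - f x y).
Proof.
  intros HW Hf. apply SN_ext with (g := fun x y => (fun _ _ => -1) x y * f x y); [exact HW| |].
  - intros; ring.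
  - apply SN_mult; [exact HW|apply SN_const; exact HW|exact Hf].
Qed.

Lemma SN_restr U W n f : smooth_on U f -> (forall x y, W x y -> U x y) -> SN W n f.
Proof. intros Hf HWU l _ x y Hxy. apply Hf, HWU, Hxy. Qed.


Ltac eta_fix := repeat match goal with |- context [Derive (fun x : R => ?f x) ?t] => change (Derive (fun x : R => f x) t) with (Derive f t) end.
Ltac d1 := apply is_derive_unique; auto_derive; [repeat split; auto|]; eta_fix;
  match goal with |- ?a = ?b => change (@eq R a b) end.

Lemma L_es c (u v : R -> R) t : ex_derive u t -> ex_derive v t ->
  Derive (fun s => c * exp (u s) * sin (v s)) t = c * (exp (u t) * Derive u t * sin (v t) + exp (u t) * (cos (v t) * Derive v t)).
Proof. intros; d1. ring. Qed.

Lemma L_ec c (u v : R -> R) t : ex_derive u t -> ex_derive v t ->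
  Derive (fun s => c * exp (u s) * cos (v s)) t = c * (exp (u t) * Derive u t * cos (v t) + exp (u t) * (- sin (v t) * Derive v t)).
Proof. intros; d1. ring. Qed.

Lemma L_a1 c (w v : R -> R) t : ex_derive w t -> ex_derive v t ->
  Derive (fun s => c * (cos (v s) + w s * sin (v s))) t = c * (- sin (v t) * Derive v t + (Derive w t * sin (v t) + w t * (cos (v t) * Derive v t))).
Proof. intros; d1. ring. Qed.

Lemma L_a2 c (w v : R -> R) t : ex_derive w t -> ex_derive v t ->
  Derive (fun s => c * (sin (v s) - w s * cos (v s))) t = c * (cos (v t) * Derive v t - (Derive w t * cos (v t) + w t * (- sin (v t) * Derive v t))).
Proof. intros; d1. ring. Qed.

Lemma L_hx (w v z : R -> R) t : ex_derive w t -> ex_derive v t -> ex_derive z t -> sin (v t) <> 0 ->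
  Derive (fun s => (w s + cos (v s) / sin (v s)) * z s) t = (Derive w t + (- sin (v t) * Derive v t * sin (v t) - cos (v t) * (cos (v t) * Derive v t)) / (sin (v t))^2) * z t + (w t + cos (v t) / sin (v t)) * Derive z t.
Proof. intros; d1. field. auto. Qed.

Lemma L_hy (w v z : R -> R) t : ex_derive w t -> ex_derive v t -> ex_derive z t -> cos (v t) <> 0 ->
  Derive (fun s => (w s - sin (v s) / cos (v s)) * z s) t = (Derive w t - (cos (v t) * Derive v t * cos (v t) - sin (v t) * (- sin (v t) * Derive v t)) / (cos (v t))^2) * z t + (w t - sin (v t) / cos (v t)) * Derive z t.
Proof. intros; d1. field. auto. Qed.

Lemma LocX W f g x y : open2 W -> W x y -> (forall s t, W s t -> f s t = g s t) -> dx f x y = dx g x y.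
Proof.
  intros HW Hxy Hfg. unfold dx. apply Derive_ext_loc.
  generalize (open2_locx W x y HW Hxy). apply filter_imp. intros t Ht. apply Hfg; exact Ht.
Qed.

Lemma LocY W f g x y : open2 W -> W x y -> (forall s t, W s t -> f s t = g s t) -> dy f x y = dy g x y.
Proof.
  intros HW Hxy Hfg. unfold dy. apply Derive_ext_loc.
  generalize (open2_locy W x y HW Hxy). apply filter_imp. intros t Ht. apply Hfg; exact Ht.
Qed.

Lemma sm_ex W f l x y : smooth_on W f -> W x y ->
  ex_derive (fun t => Dw l f t y) x /\ ex_derive (fun t => Dw l f x t) y.
Proof. intros H Hxy. destruct (H l x y Hxy) as [A [B _]]. auto. Qed.

Lemma Schw W f x y : open2 W -> smooth_on W f -> W x y -> dx (dy f) x y = dy (dx f) x y.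
Proof.
  intros HW Hs Hxy. unfold dx, dy. apply Schwarz.
  - destruct (HW x y Hxy) as [e [He Hb]]. exists (mkposreal e He). intros u v Hu Hv.
    assert (Huv : W u v) by (apply Hb; assumption).
    destruct (Hs nil u v Huv) as [A1 [A2 _]].
    destruct (Hs (false :: nil) u v Huv) as [B1 _].
    destruct (Hs (true :: nil) u v Huv) as [_ [C2 _]].
    simpl in *. unfold dx, dy in *. auto.
  - apply continuity_2d_pt_filterlim. exact (proj2 (proj2 (Hs (true :: false :: nil) x y Hxy))).
  - apply continuity_2d_pt_filterlim. exact (proj2 (proj2 (Hs (false :: true :: nil) x y Hxy))).
Qed.


Section Core.
Variables (W : R -> R -> Prop) (A1 A2 H K h al xi : R -> R -> R) (s2 sg : R).
Hypothesis HW : open2 W.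
Hypothesis Hsg : sg = 1 \/ sg = -1.
Hypothesis Hs2 : s2 = 1 \/ s2 = -1.
Hypothesis Hh : smooth_on W h.
Hypothesis Hal : smooth_on W al.
Hypothesis Hxi : smooth_on W xi.
Hypothesis Hrel : forall x y, W x y ->
     H x y = sg * s2 * exp (xi x y) * sin (al x y) /\
     K x y = - s2 * exp (xi x y) * cos (al x y) /\
     A1 x y = sg * s2 * (cos (al x y) + h x y * sin (al x y)) /\
     A2 x y = s2 * (sin (al x y) - h x y * cos (al x y)) /\
     sin (al x y) <> 0 /\ cos (al x y) <> 0 /\ A1 x y <> 0 /\ A2 x y <> 0.
Hypothesis Hcod : forall x y, W x y ->
     dy H x y = (dy A1 x y / A2 x y) * K x y /\
     dx K x y = (dx A2 x y / A1 x y) * H x y /\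
     dy (fun s t => dy A1 s t / A2 s t) x y + dx (fun s t => dx A2 s t / A1 s t) x y
       + H x y * K x y = 0.

Lemma sg0 : sg <> 0. Proof. destruct Hsg; lra. Qed.
Lemma s20 : s2 <> 0. Proof. destruct Hs2; lra. Qed.

Lemma exX f x y : smooth_on W f -> W x y -> ex_derive (fun t => f t y) x.
Proof. intros Hf Hxy. exact (proj1 (sm_ex W f nil x y Hf Hxy)). Qed.
Lemma exY f x y : smooth_on W f -> W x y -> ex_derive (fun t => f x t) y.
Proof. intros Hf Hxy. exact (proj2 (sm_ex W f nil x y Hf Hxy)). Qed.

Lemma dyH x y : W x y -> dy H x y = sg * s2 * (exp (xi x y) * dy xi x y * sin (al x y) + exp (xi x y) * (cos (al x y) * dy al x y)).
Proof.
  intro Hxy. rewrite (LocY W H (fun s t => sg * s2 * exp (xi s t) * sin (al s t)) x y HW Hxy).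
  - unfold dy. apply (L_es (sg*s2) (fun t => xi x t) (fun t => al x t)); [apply exY|apply exY]; auto.
  - intros s t Hst. now destruct (Hrel s t Hst).
Qed.

Lemma dxK x y : W x y -> dx K x y = - s2 * (exp (xi x y) * dx xi x y * cos (al x y) + exp (xi x y) * (- sin (al x y) * dx al x y)).
Proof.
  intro Hxy. rewrite (LocX W K (fun s t => - s2 * exp (xi s t) * cos (al s t)) x y HW Hxy).
  - unfold dx. apply (L_ec (-s2) (fun t => xi t y) (fun t => al t y)); [apply exX|apply exX]; auto.
  - intros s t Hst. now destruct (Hrel s t Hst) as (_ & X & _).
Qed.

Lemma dyA1 x y : W x y -> dy A1 x y = sg * s2 * (- sin (al x y) * dy al x y + (dy h x y * sin (al x y) + h x y * (cos (al x y) * dy al x y))).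
Proof.
  intro Hxy. rewrite (LocY W A1 (fun s t => sg * s2 * (cos (al s t) + h s t * sin (al s t))) x y HW Hxy).
  - unfold dy. apply (L_a1 (sg*s2) (fun t => h x t) (fun t => al x t)); [apply exY|apply exY]; auto.
  - intros s t Hst. now destruct (Hrel s t Hst) as (_ & _ & X & _).
Qed.

Lemma dxA2 x y : W x y -> dx A2 x y = s2 * (cos (al x y) * dx al x y - (dx h x y * cos (al x y) + h x y * (- sin (al x y) * dx al x y))).
Proof.
  intro Hxy. rewrite (LocX W A2 (fun s t => s2 * (sin (al s t) - h s t * cos (al s t))) x y HW Hxy).
  - unfold dx. apply (L_a2 s2 (fun t => h t y) (fun t => al t y)); [apply exX|apply exX]; auto.
  - intros s t Hst. now destruct (Hrel s t Hst) as (_ & _ & _ & X & _).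
Qed.

Lemma hy_eq x y : W x y -> dy h x y = (h x y - sin (al x y) / cos (al x y)) * dy xi x y.
Proof.
  intro Hxy. destruct (Hrel x y Hxy) as (RH & RK & RA1 & RA2 & nS & nC & nA1 & nA2).
  destruct (Hcod x y Hxy) as (C1 & _ & _).
  rewrite dyH, dyA1, RA2, RK in C1 by exact Hxy.
  assert (nP : sin (al x y) - h x y * cos (al x y) <> 0).
  { intro E. apply nA2. rewrite RA2, E. ring. }
  assert (ep := exp_pos (xi x y)).
  generalize sg0 s20; intros n1 n2.
  set (S := sin (al x y)) in *. set (C := cos (al x y)) in *. set (e := exp (xi x y)) in *.
  set (hy := dy h x y) in *. set (xy := dy xi x y) in *. set (ay := dy al x y) in *.
  set (hh := h x y) in *.
  match type of C1 with ?a = ?b =>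
    assert (key : sg * s2 * e * (S * ((S - hh * C) * xy + C * hy)) = (S - hh * C) * (a - b))
      by (field; split; auto) end.
  rewrite C1, Rminus_diag, Rmult_0_r in key.
  assert (k2 : (S - hh * C) * xy + C * hy = 0).
  { apply Rmult_integral in key. destruct key as [k|k].
    - exfalso. apply Rmult_integral in k. destruct k as [k|k]; [|lra].
      apply Rmult_integral in k. destruct k; auto.
    - apply Rmult_integral in k. destruct k as [k|k]; [contradiction|exact k]. }
  apply (Rmult_eq_reg_l C); [|exact nC].
  replace (C * ((hh - S / C) * xy)) with (- ((S - hh * C) * xy)) by (field; exact nC).
  lra.
Qed.

Lemma hx_eq x y : W x y -> dx h x y = (h x y + cos (al x y) / sin (al x y)) * dx xi x y.
Proof.
  intro Hxy. destruct (Hrel x y Hxy) as (RH & RK & RA1 & RA2 & nS & nC & nA1 & nA2).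
  destruct (Hcod x y Hxy) as (_ & C2 & _).
  rewrite dxK, dxA2, RA1, RH in C2 by exact Hxy.
  assert (nQ : cos (al x y) + h x y * sin (al x y) <> 0).
  { intro E. apply nA1. rewrite RA1, E. ring. }
  assert (ep := exp_pos (xi x y)).
  generalize sg0 s20; intros n1 n2.
  set (S := sin (al x y)) in *. set (C := cos (al x y)) in *. set (e := exp (xi x y)) in *.
  set (hx := dx h x y) in *. set (xx := dx xi x y) in *. set (ax := dx al x y) in *.
  set (hh := h x y) in *.
  match type of C2 with ?a = ?b =>
    assert (key : - s2 * e * (C * ((C + hh * S) * xx - S * hx)) = (C + hh * S) * (a - b))
      by (field; repeat split; auto) end.
  rewrite C2, Rminus_diag, Rmult_0_r in key.
  assert (k2 : (C + hh * S) * xx - S * hx = 0).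
  { apply Rmult_integral in key. destruct key as [k|k].
    - exfalso. apply Rmult_integral in k. destruct k as [k|k]; [|lra].
      lra.
    - apply Rmult_integral in k. destruct k as [k|k]; [contradiction|exact k]. }
  apply (Rmult_eq_reg_l S); [|exact nS].
  replace (S * ((hh + C / S) * xx)) with ((C + hh * S) * xx) by (field; exact nS).
  lra.
Qed.


Lemma p_eq s t : W s t -> dy A1 s t / A2 s t = - sg * (dy al s t + dy xi s t * (sin (al s t) / cos (al s t))).
Proof.
  intro Hst. destruct (Hrel s t Hst) as (RH & RK & RA1 & RA2 & nS & nC & nA1 & nA2).
  rewrite dyA1, hy_eq, RA2 by exact Hst.
  assert (nP : sin (al s t) - h s t * cos (al s t) <> 0).
  { intro E. apply nA2. rewrite RA2, E. ring. }
  generalize s20; intro n2. field. auto.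
Qed.

Lemma q_eq s t : W s t -> dx A2 s t / A1 s t = - sg * (- dx al s t + dx xi s t * (cos (al s t) / sin (al s t))).
Proof.
  intro Hst. destruct (Hrel s t Hst) as (RH & RK & RA1 & RA2 & nS & nC & nA1 & nA2).
  rewrite dxA2, hx_eq, RA1 by exact Hst.
  assert (nQ : cos (al s t) + h s t * sin (al s t) <> 0).
  { intro E. apply nA1. rewrite RA1, E. ring. }
  generalize s20; intro n2. destruct Hsg as [E|E]; rewrite E; field; auto.
Qed.

Lemma gauss_eq x y : W x y ->
      dx (fun s t => - dx al s t + dx xi s t * (cos (al s t) / sin (al s t))) x y
        + dy (fun s t => dy al s t + dy xi s t * (sin (al s t) / cos (al s t))) x y
        + exp (2 * xi x y) * sin (al x y) * cos (al x y) = 0.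
Proof.
  intro Hxy. destruct (Hcod x y Hxy) as (_ & _ & C3).
  assert (Ep : dy (fun s t => dy A1 s t / A2 s t) x y = - sg * dy (fun s t => dy al s t + dy xi s t * (sin (al s t) / cos (al s t))) x y).
  { rewrite (LocY W _ (fun s t => - sg * (dy al s t + dy xi s t * (sin (al s t) / cos (al s t)))) x y HW Hxy).
    - unfold dy. apply Derive_scal.
    - intros s t Hst. apply p_eq; exact Hst. }
  assert (Eq : dx (fun s t => dx A2 s t / A1 s t) x y = - sg * dx (fun s t => - dx al s t + dx xi s t * (cos (al s t) / sin (al s t))) x y).
  { rewrite (LocX W _ (fun s t => - sg * (- dx al s t + dx xi s t * (cos (al s t) / sin (al s t)))) x y HW Hxy).
    - unfold dx. apply Derive_scal.
    - intros s t Hst. apply q_eq; exact Hst. }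
  rewrite Ep, Eq in C3. destruct (Hrel x y Hxy) as (RH & RK & _).
  rewrite RH, RK in C3.
  replace (2 * xi x y) with (xi x y + xi x y) by ring. rewrite exp_plus.
  set (F := dx (fun s t => - dx al s t + dx xi s t * (cos (al s t) / sin (al s t))) x y) in *.
  set (G := dy (fun s t => dy al s t + dy xi s t * (sin (al s t) / cos (al s t))) x y) in *.
  set (e := exp (xi x y)) in *. set (S := sin (al x y)) in *. set (C := cos (al x y)) in *.
  destruct Hsg as [E1|E1]; destruct Hs2 as [E2|E2]; rewrite E1, E2 in C3; nra.
Qed.

Lemma xixy_eq x y : W x y ->
      dx (dy xi) x y = dx xi x y * dy xi x y
        + (dy al x y * cos (al x y) / sin (al x y)) * dx xi x y
        + (- dx al x y * sin (al x y) / cos (al x y)) * dy xi x y.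
Proof.
  intro Hxy. destruct (Hrel x y Hxy) as (RH & RK & RA1 & RA2 & nS & nC & nA1 & nA2).
  assert (Sh := Schw W h x y HW Hh Hxy).
  assert (Sx := Schw W xi x y HW Hxi Hxy).
  assert (E1 : dx (dy h) x y = (dx h x y - (cos (al x y) * dx al x y * cos (al x y) - sin (al x y) * (- sin (al x y) * dx al x y)) / (cos (al x y))^2) * dy xi x y + (h x y - sin (al x y) / cos (al x y)) * dx (dy xi) x y).
  { rewrite (LocX W (dy h) (fun s t => (h s t - sin (al s t) / cos (al s t)) * dy xi s t) x y HW Hxy).
    - unfold dx at 1. apply (L_hy (fun t => h t y) (fun t => al t y) (fun t => dy xi t y)); auto.
      + apply exX; auto. + apply exX; auto.
      + exact (proj1 (sm_ex W xi (false :: nil) x y Hxi Hxy)).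
    - intros s t Hst. apply hy_eq; exact Hst. }
  assert (E2 : dy (dx h) x y = (dy h x y + (- sin (al x y) * dy al x y * sin (al x y) - cos (al x y) * (cos (al x y) * dy al x y)) / (sin (al x y))^2) * dx xi x y + (h x y + cos (al x y) / sin (al x y)) * dy (dx xi) x y).
  { rewrite (LocY W (dx h) (fun s t => (h s t + cos (al s t) / sin (al s t)) * dx xi s t) x y HW Hxy).
    - unfold dy at 1. apply (L_hx (fun t => h x t) (fun t => al x t) (fun t => dx xi x t)); auto.
      + apply exY; auto. + apply exY; auto.
      + exact (proj2 (sm_ex W xi (true :: nil) x y Hxi Hxy)).
    - intros s t Hst. apply hx_eq; exact Hst. }
  rewrite <- Sx in E2. rewrite Sh, E2 in E1. clear E2.
  rewrite hx_eq, hy_eq in E1 by exact Hxy.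
  assert (SC := sin2_cos2 (al x y)).
  set (Z := dx (dy xi) x y) in *.
  set (S := sin (al x y)) in *. set (C := cos (al x y)) in *.
  set (xx := dx xi x y) in *. set (xy := dy xi x y) in *.
  set (ax := dx al x y) in *. set (ay := dy al x y) in *. set (hh := h x y) in *.
  unfold Rsqr in SC.
  match type of E1 with ?a = ?b =>
    assert (key : (S*S + C*C) * (Z - (xx * xy + (ay * C / S) * xx + (- ax * S / C) * xy)) = S * C * (a - b))
      by (field; split; auto) end.
  rewrite E1, Rminus_diag, Rmult_0_r, SC, Rmult_1_l in key. lra.
Qed.

End Core.


Lemma algD qn A1 A2 k1 k2 T1 T2 : qn <> 0 ->
  k1 * T1 + k2 * T2 + qn = 0 ->
  qn * A1 ^ 2 - 2 * (T2 * A1) * (- k1 * A1) = qn ->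
  qn * A2 ^ 2 - 2 * (T1 * A2) * (- k2 * A2) = qn ->
  ((- k1 * A1) * A2 - (- k2 * A2) * A1) ^ 2 = (- k1 * A1) ^ 2 + (- k2 * A2) ^ 2.
Proof.
  intros Hq E3 E1 E2.
  assert (a1 : A1^2 * (qn + 2*T2*k1) - qn = 0) by (rewrite <- E1 at 2; ring).
  assert (a2 : A2^2 * (qn + 2*T1*k2) - qn = 0) by (rewrite <- E2 at 2; ring).
  apply Rminus_diag_uniq.
  apply (Rmult_eq_reg_l qn); [|exact Hq].
  rewrite Rmult_0_r.
  transitivity (-2*k1*k2*A1^2*A2^2*(k1*T1+k2*T2+qn) + k1^2*A1^2*(A2^2*(qn+2*T1*k2) - qn) + k2^2*A2^2*(A1^2*(qn+2*T2*k1) - qn)).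
  - ring.
  - rewrite E3, a1, a2. ring.
Qed.

Lemma Tform qn A K T S C h e s :
  (s = 1 \/ s = -1) -> A <> 0 -> K <> 0 -> C <> 0 -> 0 < e -> S * S + C * C = 1 ->
  A = s * (S - h * C) -> K = - s * e * C ->
  qn * A ^ 2 - 2 * (T * A) * K = qn ->
  T = qn * / e / 2 * ((2 * h * S + (1 - h ^ 2) * C) / (S - h * C)).
Proof.
  intros Hs nA nK nC He SC RA RK Eq.
  assert (T1e : T = qn * (A^2 - (S*S + C*C)) / (2 * A * K)).
  { rewrite SC. apply (Rmult_eq_reg_l (2 * A * K)).
    - field_simplify; [|auto]. lra.
    - repeat apply Rmult_integral_contrapositive_currified; auto; lra. }
  assert (nP : S - h * C <> 0) by (intro Z; apply nA; rewrite RA, Z; ring).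
  rewrite T1e, RA, RK. destruct Hs as [-> | ->]; field; repeat split; auto; lra.
Qed.

Lemma Tform2 qn A H T S C h e s :
  (s = 1 \/ s = -1) -> A <> 0 -> H <> 0 -> S <> 0 -> 0 < e -> S * S + C * C = 1 ->
  A = s * (C + h * S) -> H = s * e * S ->
  qn * A ^ 2 - 2 * (T * A) * H = qn ->
  T = qn * / e / 2 * ((2 * h * C - (1 - h ^ 2) * S) / (C + h * S)).
Proof.
  intros Hs nA nH nS He SC RA RH Eq.
  assert (T1e : T = qn * (A^2 - (S*S + C*C)) / (2 * A * H)).
  { rewrite SC. apply (Rmult_eq_reg_l (2 * A * H)).
    - field_simplify; [|auto]. lra.
    - repeat apply Rmult_integral_contrapositive_currified; auto; lra. }
  assert (nP : C + h * S <> 0) by (intro Z; apply nA; rewrite RA, Z; ring).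
  rewrite T1e, RA, RH. destruct Hs as [-> | ->]; field; repeat split; auto; lra.
Qed.

Lemma relalg H K A1 A2 sg s2 :
  (sg = 1 \/ sg = -1) -> (s2 = 1 \/ s2 = -1) -> H <> 0 -> K <> 0 ->
  0 < sg * (H * A2 - K * A1) -> 0 < - s2 * K ->
  (H * A2 - K * A1) ^ 2 = H ^ 2 + K ^ 2 ->
  let E := sg * (H * A2 - K * A1) in
  let h := (A1 * E + sg * K) / H in
  let S := sin (atan (- sg * H / K)) in
  let C := cos (atan (- sg * H / K)) in
  H = sg * s2 * E * S /\ K = - s2 * E * C /\
  A1 = sg * s2 * (C + h * S) /\ A2 = s2 * (S - h * C) /\ S <> 0 /\ C <> 0.
Proof.
  intros Hsg Hs2 nH nK HE HK Dsq E h S C.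
  assert (nE : E <> 0) by (unfold E; lra).
  assert (sq : sqrt (1 + (- sg * H / K)²) = E / (- s2 * K)).
  { assert (Heq : 1 + (- sg * H / K)² = (E / (- s2 * K)) ^ 2).
    { unfold E. replace ((sg * (H * A2 - K * A1) / (- s2 * K)) ^ 2) with
        ((sg * sg) * (H * A2 - K * A1) ^ 2 / ((s2 * s2) * K ^ 2)) by (field; destruct Hs2; lra).
      rewrite Dsq. unfold Rsqr. destruct Hsg as [-> | ->]; destruct Hs2 as [-> | ->]; field; auto. }
    rewrite Heq. apply sqrt_pow2. apply Rlt_le. unfold Rdiv. apply Rmult_lt_0_compat; [unfold E; lra|].
    apply Rinv_0_lt_compat; lra. }
  assert (eS : S = sg * s2 * H / E).
  { unfold S. rewrite sin_atan, sq. field. split; [lra|]. split; auto. destruct Hs2; lra. }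
  assert (eC : C = - s2 * K / E).
  { unfold C. rewrite cos_atan, sq. field. split; [lra|]. split; auto. destruct Hs2; lra. }
  assert (Ed : E = sg * (H * A2 - K * A1)) by reflexivity.
  clearbody E. clearbody S C. unfold h.
  split; [|split; [|split; [|split; [|split]]]].
  - rewrite eS. destruct Hsg as [-> | ->]; destruct Hs2 as [-> | ->]; field; auto.
  - rewrite eC. destruct Hs2 as [-> | ->]; field; auto.
  - rewrite eS, eC. destruct Hsg as [-> | ->]; destruct Hs2 as [-> | ->]; field; auto.
  - apply Rminus_diag_uniq.
    transitivity (sg * ((H * A2 - K * A1) ^ 2 - (H ^ 2 + K ^ 2)) / (H * E)).
    + assert (nD : H * A2 - K * A1 <> 0) by (intro Z; apply nE; rewrite Ed, Z; ring).
      rewrite eS, eC. rewrite Ed. clear Ed Dsq.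
      destruct Hsg as [E1 | E1]; destruct Hs2 as [E2 | E2]; rewrite E1, E2; field; split; auto.
    + rewrite Dsq. field. auto.
  - rewrite eS. intro Z. unfold Rdiv in Z. apply Rmult_integral in Z. destruct Z as [Z|Z].
    + apply Rmult_integral in Z. destruct Z as [Z|Z]; [|contradiction].
      destruct Hsg, Hs2; subst; lra.
    + apply Rinv_neq_0_compat in nE. contradiction.
  - rewrite eC. intro Z. unfold Rdiv in Z. apply Rmult_integral in Z. destruct Z as [Z|Z].
    + apply Rmult_integral in Z. destruct Z as [Z|Z]; [|contradiction]. destruct Hs2; subst; lra.
    + apply Rinv_neq_0_compat in nE. contradiction.
Qed.


Lemma square_open x0 y0 e : open2 (square x0 y0 e).
Proof.
  intros x y [Hx Hy].
  exists (Rmin (e - Rabs (x - x0)) (e - Rabs (y - y0))). split.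
  - apply Rmin_pos; lra.
  - intros x' y' H1 H2.
    assert (m1 := Rmin_l (e - Rabs (x - x0)) (e - Rabs (y - y0))).
    assert (m2 := Rmin_r (e - Rabs (x - x0)) (e - Rabs (y - y0))).
    assert (t1 : Rabs (x' - x0) <= Rabs (x' - x) + Rabs (x - x0))
      by (replace (x' - x0) with ((x' - x) + (x - x0)) by ring; apply Rabs_triang).
    assert (t2 : Rabs (y' - y0) <= Rabs (y' - y) + Rabs (y - y0))
      by (replace (y' - y0) with ((y' - y) + (y - y0)) by ring; apply Rabs_triang).
    split; lra.
Qed.

Lemma cont_pos W g x0 y0 : open2 W -> W x0 y0 -> SN W 0 g -> 0 < g x0 y0 ->
  exists d, 0 < d /\ forall u v, Rabs (u - x0) < d -> Rabs (v - y0) < d -> 0 < g u v.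
Proof.
  intros HW H0 Hg Hp. destruct (SN0_elim W 0 g x0 y0 Hg H0) as (_ & _ & Hc).
  assert (Hc2 : continuity_2d_pt g x0 y0) by (apply continuity_2d_pt_filterlim; exact Hc).
  destruct (Hc2 (mkposreal _ Hp)) as [d Hd]. exists d. split; [apply cond_pos|].
  intros u v Hu Hv. specialize (Hd u v Hu Hv). simpl in Hd. apply Rabs_def2 in Hd. lra.
Qed.

Lemma SN_sub U W n f : SN U n f -> (forall x y, W x y -> U x y) -> SN W n f.
Proof. intros Hf HWU l Hl x y Hxy. apply Hf; auto. Qed.
Theorem mainTheorem2
  (U : R -> R -> Prop) (r X Y : R -> R -> V3)
  (A1 A2 k1 k2 T1 T2 : R -> R -> R) (qn : R) :
  open2 U ->
  smoothV U r -> smoothV U X -> smoothV U Y ->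
  smooth_on U A1 -> smooth_on U A2 -> smooth_on U k1 -> smooth_on U k2 ->
  smooth_on U T1 -> smooth_on U T2 ->
  qn <> 0 ->
  (* regular parametrization, nondegenerate third fundamental form *)
  (forall x y, U x y -> A1 x y <> 0 /\ A2 x y <> 0 /\ k1 x y <> 0 /\ k2 x y <> 0) ->
  (* orthonormal frame X, Y *)
  (forall x y, U x y ->
     dot (X x y) (X x y) = 1 /\ dot (Y x y) (Y x y) = 1 /\ dot (X x y) (Y x y) = 0) ->
  (* curvature line coordinates: r_x = A1 X, r_y = A2 Y,
     N_x = H X, N_y = K Y with H = -k1 A1, K = -k2 A2 *)
  (forall x y, U x y ->
     dxV r x y = vscale (A1 x y) (X x y) /\ dyV r x y = vscale (A2 x y) (Y x y)) ->
  (forall x y, U x y ->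
     dxV (normal X Y) x y = vscale (circ k1 A1 x y) (X x y) /\
     dyV (normal X Y) x y = vscale (circ k2 A2 x y) (Y x y)) ->
  (* Gauss-Mainardi-Codazzi equations (as recorded in the setting) *)
  (forall x y, U x y ->
     dy (circ k1 A1) x y = (dy A1 x y / A2 x y) * circ k2 A2 x y /\
     dx (circ k2 A2) x y = (dx A2 x y / A1 x y) * circ k1 A1 x y /\
     dy (fun s t => dy A1 s t / A2 s t) x y + dx (fun s t => dx A2 s t / A1 s t) x y
       + circ k1 A1 x y * circ k2 A2 x y = 0) ->
  (* membrane equilibrium under constant normal load qn *)
  (forall x y, U x y ->
     dx T1 x y + (dx A1 x y / A1 x y) * (T1 x y - T2 x y) = 0 /\
     dy T2 x y + (dy A2 x y / A2 x y) * (T2 x y - T1 x y) = 0 /\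
     k1 x y * T1 x y + k2 x y * T2 x y + qn = 0) ->
  (* 2nd kind: f = g = qn, with Abar1 = T2 A1, Abar2 = T1 A2 *)
  (forall x y, U x y ->
     qn * (A1 x y) ^ 2 - 2 * (T2 x y * A1 x y) * circ k1 A1 x y = qn /\
     qn * (A2 x y) ^ 2 - 2 * (T1 x y * A2 x y) * circ k2 A2 x y = qn) ->
  forall x0 y0, U x0 y0 ->
  exists eps, 0 < eps /\ (forall x y, square x0 y0 eps x y -> U x y) /\
  exists h al xi : R -> R -> R,
    smooth_on (square x0 y0 eps) h /\ smooth_on (square x0 y0 eps) al /\
    smooth_on (square x0 y0 eps) xi /\
    forall x y, square x0 y0 eps x y ->
      (* first fundamental form *)
      (A1 x y) ^ 2 = (cos (al x y) + h x y * sin (al x y)) ^ 2 /\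
      (A2 x y) ^ 2 = (sin (al x y) - h x y * cos (al x y)) ^ 2 /\
      (* third fundamental form *)
      (circ k1 A1 x y) ^ 2 = exp (2 * xi x y) * (sin (al x y)) ^ 2 /\
      (circ k2 A2 x y) ^ 2 = exp (2 * xi x y) * (cos (al x y)) ^ 2 /\
      (* the system *)
      dx h x y = (h x y + cos (al x y) / sin (al x y)) * dx xi x y /\
      dy h x y = (h x y - sin (al x y) / cos (al x y)) * dy xi x y /\
      dx (dy xi) x y = dx xi x y * dy xi x y
        + (dy al x y * cos (al x y) / sin (al x y)) * dx xi x y
        + (- dx al x y * sin (al x y) / cos (al x y)) * dy xi x y /\
      dx (fun s t => - dx al s t + dx xi s t * (cos (al s t) / sin (al s t))) x y
        + dy (fun s t => dy al s t + dy xi s t * (sin (al s t) / cos (al s t))) x y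
        + exp (2 * xi x y) * sin (al x y) * cos (al x y) = 0 /\
      (* stress resultants *)
      T1 x y = qn * exp (- xi x y) / 2 *
        ((2 * h x y * sin (al x y) + (1 - (h x y) ^ 2) * cos (al x y))
          / (sin (al x y) - h x y * cos (al x y))) /\
      T2 x y = qn * exp (- xi x y) / 2 *
        ((2 * h x y * cos (al x y) - (1 - (h x y) ^ 2) * sin (al x y))
          / (cos (al x y) + h x y * sin (al x y))).
Proof.
  intros HU Hr HX HY HA1 HA2 Hk1 Hk2 HT1 HT2 Hqn Hnz Hon Hrx HN Hcod Heq H2k x0 y0 Hx0.
  pose (H := circ k1 A1). pose (K := circ k2 A2).
  assert (SNH : forall n, SN U n H).
  { intro n. unfold H, circ. apply (SN_mult U HU n (fun x y => - k1 x y) A1).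
    - apply SN_opp; [exact HU|apply smooth_SN; exact Hk1].
    - apply smooth_SN; exact HA1. }
  assert (SNK : forall n, SN U n K).
  { intro n. unfold K, circ. apply (SN_mult U HU n (fun x y => - k2 x y) A2).
    - apply SN_opp; [exact HU|apply smooth_SN; exact Hk2].
    - apply smooth_SN; exact HA2. }
  assert (nz : forall x y, U x y -> H x y <> 0 /\ K x y <> 0 /\ A1 x y <> 0 /\ A2 x y <> 0).
  { intros x y Hxy. destruct (Hnz x y Hxy) as (a & b & c & d). unfold H, K, circ.
    repeat split; auto; intro Z; apply Rmult_integral in Z; destruct Z as [Z|Z]; auto;
      apply Ropp_eq_0_compat in Z; rewrite Ropp_involutive in Z; auto. }
  pose (D := fun x y => H x y * A2 x y - K x y * A1 x y).
  assert (Dsq : forall x y, U x y -> (D x y) ^ 2 = (H x y) ^ 2 + (K x y) ^ 2).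
  { intros x y Hxy. unfold D, H, K, circ.
    destruct (Heq x y Hxy) as (_ & _ & E3). destruct (H2k x y Hxy) as (E1 & E2).
    unfold circ in E1, E2. apply (algD qn _ _ _ _ (T1 x y) (T2 x y)); auto. }
  assert (SND : forall n, SN U n D).
  { intro n. apply SN_ext with (g := fun x y => H x y * A2 x y + - (K x y * A1 x y)); [exact HU| |].
    - intros; unfold D; ring.
    - apply SN_plus; [exact HU| |apply SN_opp; [exact HU|]]; apply SN_mult; auto; apply smooth_SN; auto. }
  assert (D0 : D x0 y0 <> 0).
  { intro Z. assert (Q := Dsq x0 y0 Hx0). rewrite Z in Q. destruct (nz x0 y0 Hx0) as (a & _).
    assert (0 < H x0 y0 ^ 2) by (simpl; rewrite Rmult_1_r; apply Rsqr_pos_lt; exact a).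
    assert (0 <= K x0 y0 ^ 2) by apply pow2_ge_0. simpl in Q. lra. }
  assert (Esg : exists sg, (sg = 1 \/ sg = -1) /\ 0 < sg * D x0 y0).
  { destruct (Rlt_or_le 0 (D x0 y0)); [exists 1|exists (-1)]; split; auto; lra. }
  destruct Esg as (sg & Hsg & Psg).
  assert (Es2 : exists s2, (s2 = 1 \/ s2 = -1) /\ 0 < - s2 * K x0 y0).
  { destruct (nz x0 y0 Hx0) as (_ & nK & _).
    destruct (Rlt_or_le 0 (K x0 y0)); [exists (-1)|exists 1]; split; auto; lra. }
  destruct Es2 as (s2 & Hs2 & Ps2).
  destruct (cont_pos U (fun x y => sg * D x y) x0 y0 HU Hx0) as (d1 & Hd1 & P1); auto.
  { apply (SN_mult U HU 0 (fun _ _ => sg) D); [apply SN_const; exact HU|apply SND]. }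
  destruct (cont_pos U (fun x y => - s2 * K x y) x0 y0 HU Hx0) as (d2 & Hd2 & P2); auto.
  { apply (SN_mult U HU 0 (fun _ _ => - s2) K); [apply SN_const; exact HU|apply SNK]. }
  destruct (HU x0 y0 Hx0) as (eU & HeU & HbU).
  pose (eps := Rmin eU (Rmin d1 d2)).
  assert (m1 : eps <= eU) by apply Rmin_l.
  assert (m2 : eps <= d1) by (eapply Rle_trans; [apply Rmin_r|apply Rmin_l]).
  assert (m3 : eps <= d2) by (eapply Rle_trans; [apply Rmin_r|apply Rmin_r]).
  assert (Heps : 0 < eps) by (apply Rmin_pos; [exact HeU|apply Rmin_pos; auto]).
  assert (HWU : forall x y, square x0 y0 eps x y -> U x y /\ 0 < sg * D x y /\ 0 < - s2 * K x y).
  { intros x y [Hx Hy]. split; [apply HbU; lra|split; [apply P1|apply P2]; lra]. }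
  exists eps. split; [exact Heps|]. split; [intros x y Hxy; apply HWU; exact Hxy|].
  pose (W := square x0 y0 eps).
  assert (HW : open2 W) by apply square_open.
  assert (WU : forall x y, W x y -> U x y) by (intros x y Hxy; apply HWU; exact Hxy).
  pose (E := fun x y => sg * D x y).
  pose (xi := fun x y => ln (E x y)).
  pose (al := fun x y => atan (- sg * H x y / K x y)).
  pose (h := fun x y => (A1 x y * E x y + sg * K x y) / H x y).
  assert (SNE : forall n, SN W n E).
  { intro n. apply (SN_mult W HW n (fun _ _ => sg) D); [apply SN_const; exact HW|].
    apply SN_sub with U; auto. }
  assert (Hxi : smooth_on W xi).
  { apply SN_smooth. intro n. apply SN_ln; auto. intros x y Hxy. apply HWU, Hxy. }
  assert (Hal : smooth_on W al).
  { apply SN_smooth. intro n. apply SN_atan; [exact HW|].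
    apply SN_ext with (g := fun x y => ((fun _ _ => - sg) x y * H x y) * / K x y); [exact HW| |].
    - intros; unfold Rdiv; reflexivity.
    - apply SN_mult; [exact HW| |apply SN_inv; [exact HW| |]].
      + apply SN_mult; [exact HW|apply SN_const; exact HW|apply SN_sub with U; auto].
      + apply SN_sub with U; auto.
      + intros x y Hxy. apply nz, WU, Hxy. }
  assert (Hh : smooth_on W h).
  { apply SN_smooth. intro n.
    apply SN_ext with (g := fun x y => (A1 x y * E x y + (fun _ _ => sg) x y * K x y) * / H x y); [exact HW| |].
    - intros; unfold h, Rdiv; reflexivity.
    - apply SN_mult; [exact HW| |apply SN_inv; [exact HW| |]].
      + apply SN_plus; [exact HW|apply SN_mult; auto|apply SN_mult; [exact HW|apply SN_const; exact HW|]];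
          apply SN_sub with U; auto; apply smooth_SN; auto.
      + apply SN_sub with U; auto.
      + intros x y Hxy. apply nz, WU, Hxy. }
  assert (Hrel : forall x y, W x y ->
     H x y = sg * s2 * exp (xi x y) * sin (al x y) /\
     K x y = - s2 * exp (xi x y) * cos (al x y) /\
     A1 x y = sg * s2 * (cos (al x y) + h x y * sin (al x y)) /\
     A2 x y = s2 * (sin (al x y) - h x y * cos (al x y)) /\
     sin (al x y) <> 0 /\ cos (al x y) <> 0 /\ A1 x y <> 0 /\ A2 x y <> 0).
  { intros x y Hxy. destruct (HWU x y Hxy) as (Uxy & Q1 & Q2).
    destruct (nz x y Uxy) as (nH & nK & nA1 & nA2).
    generalize (relalg (H x y) (K x y) (A1 x y) (A2 x y) sg s2 Hsg Hs2 nH nK Q1 Q2 (Dsq x y Uxy)).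
    cbv zeta. intros (R1 & R2 & R3 & R4 & nS & nC).
    unfold xi. rewrite exp_ln by exact Q1. unfold E, al, h, D. auto 10. }
  assert (Hcod' : forall x y, W x y ->
     dy H x y = (dy A1 x y / A2 x y) * K x y /\
     dx K x y = (dx A2 x y / A1 x y) * H x y /\
     dy (fun s t => dy A1 s t / A2 s t) x y + dx (fun s t => dx A2 s t / A1 s t) x y
       + H x y * K x y = 0).
  { intros x y Hxy. exact (Hcod x y (WU x y Hxy)). }
  exists h, al, xi. split; [exact Hh|]. split; [exact Hal|]. split; [exact Hxi|].
  intros x y Hxy.
  destruct (Hrel x y Hxy) as (RH & RK & RA1 & RA2 & nS & nC & nA1 & nA2).
  assert (SC := sin2_cos2 (al x y)). unfold Rsqr in SC.
  assert (ep := exp_pos (xi x y)).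
  assert (e2 : exp (2 * xi x y) = exp (xi x y) * exp (xi x y))
    by (rewrite <- exp_plus; f_equal; ring).
  split; [|split; [|split; [|split; [|split; [|split; [|split; [|split; [|split]]]]]]]].
  - rewrite RA1. destruct Hsg as [-> | ->]; destruct Hs2 as [-> | ->]; ring.
  - rewrite RA2. destruct Hs2 as [-> | ->]; ring.
  - change (circ k1 A1 x y) with (H x y). rewrite RH, e2.
    destruct Hsg as [-> | ->]; destruct Hs2 as [-> | ->]; ring.
  - change (circ k2 A2 x y) with (K x y). rewrite RK, e2.
    destruct Hs2 as [-> | ->]; ring.
  - exact (hx_eq W A1 A2 H K h al xi s2 sg HW Hsg Hs2 Hh Hal Hxi Hrel Hcod' x y Hxy).
  - exact (hy_eq W A1 A2 H K h al xi s2 sg HW Hsg Hs2 Hh Hal Hxi Hrel Hcod' x y Hxy).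
  - exact (xixy_eq W A1 A2 H K h al xi s2 sg HW Hsg Hs2 Hh Hal Hxi Hrel Hcod' x y Hxy).
  - exact (gauss_eq W A1 A2 H K h al xi s2 sg HW Hsg Hs2 Hh Hal Hxi Hrel Hcod' x y Hxy).
  - rewrite exp_Ropp. destruct (nz x y (WU x y Hxy)) as (_ & nK & _).
    apply (Tform qn (A2 x y) (K x y) (T1 x y) (sin (al x y)) (cos (al x y)) (h x y) (exp (xi x y)) s2); auto.
    exact (proj2 (H2k x y (WU x y Hxy))).
  - rewrite exp_Ropp. destruct (nz x y (WU x y Hxy)) as (nH' & _).
    apply (Tform2 qn (A1 x y) (H x y) (T2 x y) (sin (al x y)) (cos (al x y)) (h x y) (exp (xi x y)) (sg * s2)); auto.
    all: try first [exact (proj1 (H2k x y (WU x y Hxy))) | destruct Hsg as [-> | ->]; destruct Hs2 as [-> | ->]; lra].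
Qed.
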